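(* Let $M$ be a smooth manifold, $(\mathbf{J}_1,\mathbf{J}_2)$ a generalized Kähler structure with associated bihermitian data $(g,b,I,J)$, and $K\in\Lambda^2T^*M$ a real 2-form. Then $[\Phi_K(\mathbf{J}_1),\mathbf{J}_2]=[\Phi_K(\mathbf{J}_2),\mathbf{J}_1]$ if and only if $K\in\Lambda^{1,1}_J$ (equivalently $KJ=-J^*K$ as maps $T\to T^*$).
   Context: A generalized Kähler structure is a pair of commuting integrable generalized complex structures $(\mathbf{J}_1,\mathbf{J}_2)$ on $T\oplus T^*$ (w.r.t. an $H$-twisted Courant bracket) such that $\langle -\mathbf{J}_1\mathbf{J}_2\cdot,\cdot\rangle$ is positive definite, $\langle X+\xi,Y+\eta\rangle=\tfrac12(\xi(Y)+\eta(X))$. It corresponds to bihermitian data $(g,b,I,J)$ via the Gualtieri map $\mathbf{J}_{1/2}=\tfrac12 e^b\begin{pmatrix} I\pm J & -(\omega_I^{-1}\mp\omega_J^{-1})\\ \omega_I\mp\omega_J & -(I^*\pm J^* )\end{pmatrix}e^{-b}$, with $\omega_I=gI$, $\omega_J=gJ$ as maps $T\to T^*$. For a 2-form $K$, $e^K(X+\xi)=X+\xi+K(X,\cdot)$ and $\Phi_K(\mathbf{J})=[\mathbf{J},e^K\mathbf{J}]$. $\Lambda^{1,1}_J$ is the space of real 2-forms with $K(JX,JY)=K(X,Y)$. *)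

(* Defs.v *)
(* Pointwise (linear-algebra) model of T ⊕ T^* at a point:
   T = column vectors 'cV[R]_n, T^* = column vectors 'cV[R]_n with pairing
   xi(Y) = xi^T Y.  Endomorphisms of T ⊕ T^* are block matrices in 'M_(n+n)
   acting on col_mx X xi. *)
From HB Require Import structures.
From mathcomp Require Import all_boot all_order all_algebra.
Set Implicit Arguments. Unset Strict Implicit. Unset Printing Implicit Defensive.
Import Order.TTheory GRing.Theory Num.Theory.
Local Open Scope ring_scope.

Section Defs.
Variables (R : realFieldType) (n : nat).

Definition form (B : 'M[R]_n) (x y : 'cV[R]_n) : R := ((x^T *m B *m y) 0 0).

(* the map T -> T^*, X |-> B(X, .) ; its matrix is B^T *)
Definition flat (B : 'M[R]_n) : 'M[R]_n := B^T.

Definition gsymmetric (B : 'M[R]_n) := forall x y, form B x y = form B y x.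
Definition gskew (B : 'M[R]_n) := forall x y, form B x y = - form B y x.
Definition gposdef (B : 'M[R]_n) := forall x : 'cV[R]_n, x != 0 -> 0 < form B x x.
Definition almost_complex (A : 'M[R]_n) := A *m A = - 1%:M.
Definition compatible (G A : 'M[R]_n) :=
  forall x y, form G (A *m x) (A *m y) = form G x y.

Definition eB (K : 'M[R]_n) : 'M[R]_(n + n) := block_mx 1%:M 0 (flat K) 1%:M.

(* Gualtieri map; s = true gives J_1 (upper signs), s = false gives J_2 *)
Definition gualtieri (s : bool) (G b I J : 'M[R]_n) : 'M[R]_(n + n) :=
  let sg : R := if s then 1 else -1 in
  let wI := flat G *m I in
  let wJ := flat G *m J in
  (2%:R^-1) *:
  (eB b *m
   block_mx (I + sg *: J) (- (invmx wI - sg *: invmx wJ))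
            (wI - sg *: wJ) (- (I^T + sg *: J^T))
   *m eB (- b)).

Definition commutator (A B : 'M[R]_(n + n)) := A *m B - B *m A.

(* Phi_K(J) = [J, e^K J], e^K J being the composite e^K o J *)
Definition PhiK (K : 'M[R]_n) (JJ : 'M[R]_(n + n)) :=
  commutator JJ (eB K *m JJ).

Definition in_Lambda11 (J K : 'M[R]_n) :=
  forall x y, form K (J *m x) (J *m y) = form K x y.

End Defs.

(* Main.v *)
From mathcomp Require Import all_boot all_order all_algebra ring.
Require Import Defs.
Set Implicit Arguments. Unset Strict Implicit. Unset Printing Implicit Defensive.
Import Order.TTheory GRing.Theory Num.Theory.
Local Open Scope ring_scope.

Section Aux.
Variables (R : realFieldType) (n : nat).
Implicit Types (A B C : 'M[R]_n).

Lemma form_mx A B : (forall x y, form A x y = form B x y) -> A = B.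
Proof.
move=> h; apply/matrixP => i j.
have := h (delta_mx i 0) (delta_mx j 0).
rewrite /form trmx_delta -rowE -colE -rowE -colE !mxE.
by [].
Qed.

Lemma formT A (x y : 'cV[R]_n) : form A y x = form A^T x y.
Proof.
have e : forall M : 'M[R]_1, M 0 0 = M^T 0 0 by move=> M; rewrite mxE.
by rewrite /form e !trmx_mul trmxK mulmxA.
Qed.

Lemma formN A (x y : 'cV[R]_n) : form (- A) x y = - form A x y.
Proof. by rewrite /form mulmxN mulNmx mxE. Qed.

Lemma formJ A P (x y : 'cV[R]_n) : form A (P *m x) (P *m y) = form (P^T *m A *m P) x y.
Proof. by rewrite /form trmx_mul !mulmxA. Qed.

Lemma sym_tr A : gsymmetric A -> A^T = A.
Proof. by move=> h; apply: form_mx => x y; rewrite -formT h. Qed.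

Lemma skew_tr A : gskew A -> A^T = - A.
Proof. by move=> h; apply: form_mx => x y; rewrite -formT formN h. Qed.

Lemma compat_mx A P : compatible A P -> P^T *m A *m P = A.
Proof. by move=> h; apply: form_mx => x y; rewrite -formJ h. Qed.

Lemma posdef_unit A : gposdef A -> A \in unitmx.
Proof.
move=> h; rewrite -row_free_unit -kermx_eq0; apply/negPn/negP => nz.
have [i hi] : exists i, row i (kermx A) != 0.
  apply/existsP; apply: contraR nz; rewrite negb_exists => /forallP hr.
  by apply/eqP/row_matrixP => i; rewrite row0; apply/eqP; have := hr i; rewrite negbK.
have hv : row i (kermx A) *m A = 0 by rewrite -row_mul mulmx_ker row0.
have := h (row i (kermx A))^T.
rewrite trmx_eq0 hi => /(_ isT); rewrite /form trmxK hv mul0mx mxE ltxx.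
by [].
Qed.

Lemma inv_uniq A B : A *m B = 1%:M -> invmx A = B.
Proof.
move=> h; have [uA _] := mulmx1_unit h.
by rewrite -[invmx A]mulmx1 -h mulmxA mulVmx // mul1mx.
Qed.

End Aux.

Section Gen.
Variables (R : realFieldType) (n : nat).
Notation M := ('M[R]_(n + n)).
Implicit Types (X Y P Q E A B : M).

Definition Phi' E P := commutator P (E *m P).

Lemma conj2 X Y A B : Y *m X = 1%:M ->
  (X *m A *m Y) *m (X *m B *m Y) = X *m (A *m B) *m Y.
Proof. by move=> h; rewrite !mulmxA -(mulmxA _ Y X) h mulmx1. Qed.

Lemma conj_comm X Y A B : Y *m X = 1%:M ->
  commutator (X *m A *m Y) (X *m B *m Y) = X *m commutator A B *m Y.
Proof. by move=> h; rewrite /commutator !conj2 // mulmxBr mulmxBl. Qed.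

Lemma conj_Phi X Y E P : Y *m X = 1%:M ->
  Phi' (X *m E *m Y) (X *m P *m Y) = X *m Phi' E P *m Y.
Proof. by move=> h; rewrite /Phi' conj2 // conj_comm. Qed.

Lemma comm_scale (c d : R) A B : commutator (c *: A) (d *: B) = (c * d) *: commutator A B.
Proof.
rewrite /commutator -!scalemxAl -!scalemxAr !scalerA scalerBr.
by rewrite (mulrC d c).
Qed.

Lemma Phi_scale (c : R) E P : Phi' E (c *: P) = (c * c) *: Phi' E P.
Proof. by rewrite /Phi' -scalemxAr comm_scale. Qed.

Lemma Phi_expand N P (c : R) : P *m P = c%:M ->
  Phi' (1%:M + N) P = P *m N *m P - c *: N.
Proof.
move=> h; rewrite /Phi' /commutator mulmxDl mul1mx mulmxDr mulmxDl.
rewrite -(mulmxA N P P) h mul_mx_scalar mulmxA.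
by rewrite opprD addrACA subrr add0r.
Qed.

Lemma core N M1 M2 C (c : R) :
  M1 *m M1 = c%:M -> M2 *m M2 = c%:M -> M1 *m M2 = C -> M2 *m M1 = C ->
  commutator (Phi' (1%:M + N) M1) M2 - commutator (Phi' (1%:M + N) M2) M1
  = (M1 - M2) *m N *m (C - c%:M) - (C - c%:M) *m N *m (M1 - M2).
Proof.
move=> h1 h2 h12 h21.
rewrite (Phi_expand _ h1) (Phi_expand _ h2) /commutator.
rewrite !mulmxBl !mulmxBr !mulmxA.
rewrite -(mulmxA (M1 *m N) M1 M2) -(mulmxA (M2 *m N) M2 M1) !h12 !h21.
rewrite !mul_mx_scalar !mul_scalar_mx -!scalemxAl -!scalemxAr.
apply/matrixP => i j; rewrite !mxE; ring.
Qed.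


End Gen.

Section Blocks.
Variables (R : realFieldType) (n : nat).
Implicit Types (I J H G K b : 'M[R]_n).

Definition sg (s : bool) : R := if s then 1 else -1.
Definition Ms I J s : 'M[R]_(n + n) :=
  block_mx (I + sg s *: J) (I - sg s *: J) (I - sg s *: J) (I + sg s *: J).

Lemma eBD x y : eB x *m eB y = eB (x + y) :> 'M[R]_(n + n).
Proof.
rewrite /eB mulmx_block !mul1mx !mulmx0 !mul0mx !mulmx1 !addr0 !add0r.
congr block_mx; rewrite /flat; apply/matrixP => i j; rewrite !mxE //.
Qed.

Lemma eB0 : eB 0 = 1%:M :> 'M[R]_(n + n).
Proof. by rewrite /eB /flat trmx0 -scalar_mx_block. Qed.

Lemma Msq I J s : I *m I = - 1%:M -> J *m J = - 1%:M ->
  Ms I J s *m Ms I J s = (- 4%:R)%:M.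
Proof.
move=> hI hJ; rewrite /Ms mulmx_block (scalar_mx_block n n).
rewrite ?mulmxDl ?mulmxBl ?mulmxDr ?mulmxBr ?mulNmx ?mulmxN -?scalemxAl -?scalemxAr hI hJ.
by case: s; rewrite /sg; congr block_mx; apply/matrixP => i j; rewrite !mxE; case: (i == j); ring.
Qed.

Lemma Mprod I J s : I *m I = - 1%:M -> J *m J = - 1%:M ->
  Ms I J s *m Ms I J (~~ s) = block_mx 0 (- 4%:R)%:M (- 4%:R)%:M 0.
Proof.
move=> hI hJ; rewrite /Ms mulmx_block.
rewrite ?mulmxDl ?mulmxBl ?mulmxDr ?mulmxBr ?mulNmx ?mulmxN -?scalemxAl -?scalemxAr hI hJ.
by case: s; rewrite /sg /=; congr block_mx; apply/matrixP => i j; rewrite !mxE; case: (i == j); ring.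
Qed.

Lemma final_block I J H :
  let A := Ms I J true - Ms I J false in
  let N := block_mx 0 0 H 0 in
  let W := block_mx 0 (- 4%:R)%:M (- 4%:R)%:M 0 - (- 4%:R)%:M in
  A *m N *m W - W *m N *m A =
  block_mx ((- 8%:R) *: (J *m H - H *m J)) (8%:R *: (J *m H - H *m J))
           (8%:R *: (J *m H - H *m J)) ((- 8%:R) *: (J *m H - H *m J)).
Proof.
rewrite /= /Ms /sg (scalar_mx_block n n) !opp_block_mx !add_block_mx !mulmx_block.
do 3 rewrite ?mulmx0 ?mul0mx ?mulmxDl ?mulmxBl ?mulmxDr ?mulmxBr ?mulNmx ?mulmxN ?mul_mx_scalar ?mul_scalar_mx -?scalemxAl -?scalemxAr ?opp_block_mx ?add_block_mx.
by congr block_mx; apply/matrixP => i j; rewrite !mxE; ring.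
Qed.

End Blocks.

Section M4.
Variables (R : realFieldType) (n : nat).
Implicit Types (I J H G K b P : 'M[R]_n).

Lemma trJ G P : G \in unitmx -> P *m P = - 1%:M -> P^T *m G *m P = G ->
  P^T = - (G *m P *m invmx G).
Proof.
move=> uG hP hc.
have e : P^T *m G = G *m (- P).
  by rewrite -[in RHS]hc -!mulmxA mulmxN hP opprK mulmx1.
by rewrite -[P^T](mulmxK uG) e mulmxN mulNmx.
Qed.

Lemma invw G P : G \in unitmx -> P *m P = - 1%:M ->
  invmx (G *m P) = - (P *m invmx G).
Proof.
move=> uG hP; apply: inv_uniq.
by rewrite mulmxN !mulmxA -(mulmxA G P P) hP mulmxN mulmx1 mulNmx opprK mulmxV.
Qed.

Lemma gform s G b I J : G \in unitmx -> G^T = G ->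
  I *m I = - 1%:M -> J *m J = - 1%:M ->
  I^T *m G *m I = G -> J^T *m G *m J = G ->
  gualtieri s G b I J = 2%:R^-1 *:
    (eB b *m (block_mx 1%:M 0 0 G *m Ms I J s *m block_mx 1%:M 0 0 (invmx G)) *m eB (- b)).
Proof.
move=> uG GT hI hJ cI cJ.
rewrite /gualtieri /flat GT (invw uG hI) (invw uG hJ) (trJ uG hI cI) (trJ uG hJ cJ).
rewrite -/(sg R s).
congr (_ *: (_ *m _ *m _)).
rewrite /Ms !mulmx_block.
do 2 rewrite ?mulmx0 ?mul0mx ?mulmx1 ?mul1mx ?addr0 ?add0r.
rewrite ?mulmxDl ?mulmxBl ?mulmxDr ?mulmxBr ?mulNmx ?mulmxN -?scalemxAl -?scalemxAr ?mulmxA.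
by rewrite mulmxDl -scalemxAl !scalerN !opprD !opprK.
Qed.

End M4.

Unset Implicit Arguments.

Theorem proposition3p3 (R : realFieldType) (n : nat) (G b I J K : 'M[R]_n) :
  gsymmetric G -> gposdef G ->
  almost_complex I -> almost_complex J ->
  compatible G I -> compatible G J ->
  gskew b -> gskew K ->
  commutator (PhiK K (gualtieri true G b I J)) (gualtieri false G b I J) =
  commutator (PhiK K (gualtieri false G b I J)) (gualtieri true G b I J)
  <-> in_Lambda11 J K.
Proof.
move=> hs hpd hI hJ cI cJ _ hK.
have GT := sym_tr hs; have KT := skew_tr hK; have uG := posdef_unit hpd.
have cI' := compat_mx cI; have cJ' := compat_mx cJ.
have JT := trJ uG hJ cJ'.
set Gi := invmx G.
set T : 'M[R]_(n + n) := block_mx 1%:M 0 0 G.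
set Ti : 'M[R]_(n + n) := block_mx 1%:M 0 0 Gi.
have TiT : Ti *m T = 1%:M.
  by rewrite /T /Ti mulmx_block ?mulmx0 ?mul0mx ?mulmx1 ?mul1mx ?addr0 ?add0r mulVmx // -scalar_mx_block.
have TTi : T *m Ti = 1%:M.
  by rewrite /T /Ti mulmx_block ?mulmx0 ?mul0mx ?mulmx1 ?mul1mx ?addr0 ?add0r mulmxV // -scalar_mx_block.
have YX : (Ti *m eB (- b)) *m (eB b *m T) = 1%:M.
  by rewrite mulmxA -(mulmxA Ti) eBD addNr eB0 mulmx1 TiT.
have XY : (eB b *m T) *m (Ti *m eB (- b)) = 1%:M.
  by rewrite mulmxA -(mulmxA (eB b)) TTi mulmx1 eBD addrN eB0.
have hE0c : (Ti *m eB (- b)) *m eB K *m (eB b *m T) = 1%:M + block_mx 0 0 (Gi *m K^T) 0.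
  rewrite -!mulmxA (mulmxA (eB K)) eBD (mulmxA (eB (- b))) eBD.
  rewrite (addrC K) addKr /T /Ti /eB /flat !mulmx_block.
  rewrite ?mulmx0 ?mul0mx ?mulmx1 ?mul1mx ?addr0 ?add0r mulVmx //.
  by rewrite (scalar_mx_block n n) add_block_mx ?addr0 ?add0r.
have hg : forall s, gualtieri s G b I J = 2%:R^-1 *: ((eB b *m T) *m Ms I J s *m (Ti *m eB (- b))).
  by move=> s; rewrite (gform s b uG GT hI hJ cI' cJ') !mulmxA.
move: YX XY hE0c hg; move: (eB b *m T) (Ti *m eB (- b)) => X Y YX XY hE0c hg.
set E0 := 1%:M + block_mx 0 0 (Gi *m K^T) 0.
have hE : X *m E0 *m Y = eB K.
  by rewrite /E0 -hE0c !mulmxA XY mul1mx -mulmxA XY mulmx1.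
set h : R := 2%:R^-1.
have key : forall s, commutator (PhiK K (gualtieri s G b I J)) (gualtieri (~~ s) G b I J)
   = (h * h * h) *: (X *m commutator (Phi' E0 (Ms I J s)) (Ms I J (~~ s)) *m Y).
  move=> s; rewrite !hg.
  change (PhiK K ?Z) with (Phi' (eB K) Z).
  by rewrite -hE Phi_scale conj_Phi // comm_scale conj_comm.
rewrite (key true) (key false).
change (~~ true) with false; change (~~ false) with true.
have h0 : h * h * h != 0 by rewrite /h !mulf_neq0 // invr_eq0 pnatr_eq0.
have eqD : forall D1 D2 : 'M[R]_(n + n),
  (h * h * h) *: (X *m D1 *m Y) = (h * h * h) *: (X *m D2 *m Y) <-> D1 = D2.
  move=> D1 D2; split => [e|->//].
  have e2 := scalerI h0 e.
  have : Y *m (X *m D1 *m Y) *m X = Y *m (X *m D2 *m Y) *m X by rewrite e2.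
  by rewrite !mulmxA YX !mul1mx -!mulmxA YX !mulmx1.
rewrite eqD.
have hc := core (block_mx 0 0 (Gi *m K^T) 0) (Msq true hI hJ) (Msq false hI hJ)
  (Mprod true hI hJ) (Mprod false hI hJ).
have hfb := final_block I J (Gi *m K^T); cbv zeta in hfb.
rewrite hfb in hc.
rewrite -/E0 in hc.
have hQ : J *m (Gi *m K^T) - Gi *m K^T *m J = Gi *m K *m J - J *m Gi *m K.
  by rewrite KT !mulmxN !mulNmx opprK mulmxA addrC.
rewrite hQ in hc.
have eqQ : commutator (Phi' E0 (Ms I J true)) (Ms I J false) =
  commutator (Phi' E0 (Ms I J false)) (Ms I J true) <-> Gi *m K *m J = J *m Gi *m K.
  split => [e | e].
    have : (- 8%:R : R) *: (Gi *m K *m J - J *m Gi *m K) = 0.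
      have := hc; rewrite e subrr -(block_mx0 _ n n n n) => /esym /eq_block_mx [e1 _ _ _].
      by rewrite e1.
    move/eqP; rewrite scalemx_eq0 oppr_eq0 pnatr_eq0 /= subr_eq0.
    by move/eqP.
  apply/eqP; rewrite -subr_eq0 hc e subrr !scaler0 block_mx0 //.
rewrite eqQ.
have L11 : in_Lambda11 J K <-> J^T *m K *m J = K.
  split => [h1|h1].
    by apply: form_mx => x y; rewrite -formJ h1.
  by move=> x y; rewrite formJ h1.
rewrite L11; split => [e|e].
  have -> : J^T *m K *m J = - (G *m J *m (Gi *m K *m J)).
    by rewrite JT !mulNmx !mulmxA.
  by rewrite e !mulmxA -(mulmxA G J J) hJ mulmxN mulmx1 mulNmx mulNmx opprK mulmxV // mul1mx.
rewrite -{1}e !mulmxA -(mulmxA _ J J) hJ mulmxN mulmx1 JT mulmxN mulNmx opprK.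
by rewrite !mulmxA mulVmx // mul1mx.
Qed.
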